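(* Let $s>2$ be an integer, $A_s=\{0,1,\dots,s-1\}$, and let $A_0,A_1$ be disjoint subsets of $A_s$ with $A_0\cup A_1=A_s$, $A_0\neq A_s\neq A_1$. Let $f:[0,1]\to[0,1]$ be defined by $$f\big(\Delta^{s*}_{\alpha_1\alpha_2\dots\alpha_n\dots}\big)=\Delta^{2*}_{\beta_1\beta_2\dots\beta_n\dots},$$ where $\beta_1=0$ if $\alpha_1\in A_0$, $\beta_1=1$ if $\alpha_1\in A_1$, and for $n\ge 1$, $\beta_{n+1}=\beta_n$ if $\alpha_{n+1}=\alpha_n$ and $\beta_{n+1}=1-\beta_n$ if $\alpha_{n+1}\neq\alpha_n$. Then $f$ is nowhere monotonic: there is no open interval $(a,b)\subset[0,1]$ on which $f$ is monotone.
   Context: $L_s=A_s\times A_s\times\cdots$ denotes the space of sequences $(\alpha_n)$ with $\alpha_n\in A_s$. The $s*$-representation is an encoding of $[0,1]$ topologically equivalent to the classical $s$-adic one: there is a continuous strictly monotone surjection $h_s:[0,1]\to[0,1]$ such that $\Delta^{s*}_{\alpha_1\alpha_2\dots}=h_s\big(\sum_{n\ge1}\alpha_n s^{-n}\big)$ for every $(\alpha_n)\in L_s$. Likewise the $2*$-representation is given by a continuous strictly monotone surjection $h_2:[0,1]\to[0,1]$ via $\Delta^{2*}_{\beta_1\beta_2\dots}=h_2\big(\sum_{n\ge1}\beta_n 2^{-n}\big)$, $\beta_n\in\{0,1\}$. The value of $f(x)$ given by the formula does not depend on which $s*$-code of $x$ is used, so $f$ is a well-defined function on $[0,1]$. 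*)

(* Defs.v *)
From Stdlib Require Import Reals.
From Coquelicot Require Import Coquelicot.
Open Scope R_scope.

(* Digit sequences are indexed from 0: alpha 0 is the paper's alpha_1, etc. *)

Definition sadic (s : nat) (alpha : nat -> nat) : R :=
  Series (fun n => INR (alpha n) / (INR s) ^ (S n)).

Definition binval (beta : nat -> nat) : R :=
  Series (fun n => INR (beta n) / 2 ^ (S n)).

Fixpoint beta (A1 : nat -> bool) (alpha : nat -> nat) (n : nat) : nat :=
  match n with
  | O => if A1 (alpha O) then 1%nat else 0%nat
  | S m => if Nat.eqb (alpha (S m)) (alpha m) then beta A1 alpha m
           else (1 - beta A1 alpha m)%nat
  end.

Definition in01 (x : R) : Prop := 0 <= x <= 1.

Definition cont_strict_mono_surj01 (h : R -> R) : Prop :=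
  (forall x, in01 x -> filterlim h (within in01 (locally x)) (locally (h x))) /\
  ((forall x y, in01 x -> in01 y -> x < y -> h x < h y) \/
   (forall x y, in01 x -> in01 y -> x < y -> h y < h x)) /\
  (forall x, in01 x -> in01 (h x)) /\
  (forall y, in01 y -> exists x, in01 x /\ h x = y).

Definition monotone_on_open (f : R -> R) (a b : R) : Prop :=
  (forall x y, a < x -> x <= y -> y < b -> f x <= f y) \/
  (forall x y, a < x -> x <= y -> y < b -> f y <= f x).

(* Main.v *)
Require Import Defs.
From Stdlib Require Import Reals Lra Lia ZArith.
From Coquelicot Require Import Coquelicot.
Open Scope R_scope.

Fixpoint psum (a : nat -> R) (n : nat) : R :=
  match n with O => 0 | S m => psum a m + a m end.

Lemma psum_shift a M : psum a (S M) = a O + psum (fun k => a (S k)) M.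
Proof. induction M; simpl in *. lra. rewrite IHM. lra. Qed.

Lemma psum_scal a r M : psum (fun k => r * a k) M = r * psum a M.
Proof. induction M; simpl. ring. rewrite IHM. ring. Qed.

Lemma psum_ext a b M : (forall k, (k < M)%nat -> a k = b k) -> psum a M = psum b M.
Proof. induction M; simpl; intros H. auto. rewrite IHM by (intros; apply H; lia). rewrite H by lia. auto. Qed.

Lemma psum_le a b M : (forall k, (k < M)%nat -> a k <= b k) -> psum a M <= psum b M.
Proof. induction M; simpl; intros H. lra. assert (psum a M <= psum b M) by (apply IHM; intros; apply H; lia).
 assert (a M <= b M) by (apply H; lia). lra. Qed.

Lemma psum_ge0 a M : (forall k, (k < M)%nat -> 0 <= a k) -> 0 <= psum a M.
Proof. intros H. replace 0 with (psum (fun _ => 0) M). apply psum_le; auto.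
 induction M; simpl; auto. rewrite IHM. lra. intros; apply H; lia. Qed.

Lemma psum_geom2 M : psum (fun n => 1 / 2 ^ S n) M = 1 - 1 / 2 ^ M.
Proof. induction M. simpl; field.
 replace (psum _ (S M)) with (psum (fun n => 1/2^S n) M + 1/2^S M) by reflexivity. rewrite IHM. simpl. field. apply pow_nonzero. lra. Qed.

Lemma tail_series (x : R) (hx : 1 < x) (c : nat) : forall M (g : nat -> nat),
  (forall n, (M <= n)%nat -> g n = c) ->
  is_series (fun n => INR (g n) / x ^ (S n))
    (psum (fun n => INR (g n) / x ^ (S n)) M + INR c / ((x - 1) * x ^ M)).
Proof.
  assert (Hx0 : x <> 0) by lra.
  induction M; intros g Hg.
  - simpl psum.
    apply is_series_ext with (fun n => scal (INR c / x) ((/ x) ^ n)).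
    { intros n. rewrite Hg by lia. unfold scal; simpl; unfold mult; simpl.
      rewrite pow_inv. field. split; auto; apply pow_nonzero; auto. }
    replace (0 + INR c / ((x - 1) * x ^ 0)) with (scal (INR c / x) (/ (1 - / x))).
    2:{ unfold scal; simpl; unfold mult; simpl. field. split; lra. }
    apply (@is_series_scal_l R_AbsRing R_NormedModule). apply is_series_geom.
    rewrite Rabs_pos_eq. rewrite <- Rinv_1; apply Rinv_lt_contravar; lra. left; apply Rinv_0_lt_compat; lra.
  - specialize (IHM (fun k => g (S k))). simpl in IHM.
    assert (IH := IHM (fun n H => Hg (S n) ltac:(lia))).
    apply is_series_decr_1.
    apply is_series_ext with (fun n => scal (/ x) (INR (g (S n)) / (x * x ^ n))).
    { intros n. unfold scal; simpl; unfold mult; simpl. field. split; auto. apply pow_nonzero; auto. }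
    match goal with |- is_series _ ?L => replace L with
      (scal (/ x) (psum (fun n : nat => INR (g (S n)) / (x * x ^ n)) M + INR c / ((x - 1) * x ^ M))) end.
    apply (@is_series_scal_l R_AbsRing R_NormedModule). exact IH.
    rewrite psum_shift. unfold scal, plus, opp; simpl; unfold mult; simpl.
    rewrite (psum_ext (fun k => INR (g (S k)) / (x * (x * x ^ k))) (fun k => / x * (INR (g (S k)) / (x * x ^ k)))).
    rewrite psum_scal. field. repeat split; try lra; apply pow_nonzero; auto.
    intros; field. repeat split; auto; apply pow_nonzero; auto.
Qed.

Lemma beta_ext A1 g g' n : (forall k, (k <= n)%nat -> g k = g' k) -> beta A1 g n = beta A1 g' n.
Proof. induction n; intros H; simpl. rewrite H by lia; auto.
 rewrite IHn by (intros; apply H; lia). rewrite (H (S n)), (H n) by lia. auto. Qed.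

Lemma beta_le1 A1 g n : (beta A1 g n <= 1)%nat.
Proof. induction n; simpl. destruct (A1 (g 0%nat)); lia. destruct (Nat.eqb _ _). exact IHn. destruct (beta A1 g n); lia. Qed.

Lemma beta_const A1 g M c : (forall k, (M <= k)%nat -> g k = c) ->
  forall n, (M <= n)%nat -> beta A1 g n = beta A1 g M.
Proof. intros H n. induction n; intros Hn.
 - assert (M = 0%nat) by lia. subst; auto.
 - destruct (Nat.eq_dec M (S n)). subst; auto.
   simpl. rewrite (H (S n)), (H n) by lia. rewrite Nat.eqb_refl. apply IHn; lia. Qed.

Lemma floor_spec r : IZR (up r - 1) <= r < IZR (up r - 1) + 1.
Proof. destruct (archimed r). rewrite minus_IZR. simpl. lra. Qed.

Lemma pow_gt_n x n : 2 <= x -> INR n < x ^ n.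
Proof. intros Hx. induction n. simpl; lra. rewrite S_INR. simpl.
 assert (1 <= x ^ n) by (apply pow_R1_Rle; lra). nra. Qed.

Lemma INR_toZ z : (0 <= z)%Z -> INR (Z.to_nat z) = IZR z.
Proof. intros. rewrite INR_IZR_INZ, Z2Nat.id; auto. Qed.

Theorem theorem3
  (s : nat) (hs2 : (2 < s)%nat)
  (A0 A1 : nat -> bool)
  (hA0s : forall d, A0 d = true -> (d < s)%nat)
  (hA1s : forall d, A1 d = true -> (d < s)%nat)
  (hdisj : forall d, ~ (A0 d = true /\ A1 d = true))
  (hcover : forall d, (d < s)%nat -> A0 d = true \/ A1 d = true)
  (hA0prop : exists d, (d < s)%nat /\ A0 d = false)
  (hA1prop : exists d, (d < s)%nat /\ A1 d = false)
  (h_s h_2 : R -> R)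
  (Hs : cont_strict_mono_surj01 h_s)
  (H2 : cont_strict_mono_surj01 h_2)
  (f : R -> R)
  (Hf : forall alpha : nat -> nat, (forall n, (alpha n < s)%nat) ->
          f (h_s (sadic s alpha)) = h_2 (binval (beta A1 alpha))) :
  ~ (exists a b, 0 <= a /\ a < b /\ b <= 1 /\ monotone_on_open f a b).
Proof.
  intros [a [b [Ha [Hab [Hb Hmono]]]]].
  destruct Hs as [Hcont [Hsm [Hsin Hssurj]]].
  destruct H2 as [_ [H2m [_ _]]].
  assert (Hinj : forall u v, in01 u -> in01 v -> h_s u = h_s v -> u = v).
  { intros u v Hu Hv E. destruct (Rtotal_order u v) as [Hl|[Hl|Hl]]; auto;
    destruct Hsm as [Hi|Hi]; first [specialize (Hi _ _ Hu Hv Hl) | specialize (Hi _ _ Hv Hu Hl)]; lra. }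
  assert (Ht : exists t, 0 <= t < 1 /\ a < h_s t < b).
  { destruct (Hssurj ((a+b)/2)) as [t1 [Ht1 E1]]. unfold in01; lra.
    destruct (Hssurj ((a+3*b)/4)) as [t2 [Ht2 E2]]. unfold in01; lra.
    destruct (Rlt_le_dec t1 1).
    - exists t1. unfold in01 in Ht1. split. lra. lra.
    - destruct (Rlt_le_dec t2 1).
      + exists t2. unfold in01 in Ht2. split. lra. lra.
      + exfalso. assert (t1 = t2) by (unfold in01 in *; lra). subst. lra. }
  destruct Ht as [t [Ht Hht]].
  assert (Hdpos : 0 < Rmin (h_s t - a) (b - h_s t)) by (apply Rmin_glb_lt; lra).
  assert (Hc := Hcont t ltac:(unfold in01; lra) (fun y => Rabs (y - h_s t) < Rmin (h_s t - a) (b - h_s t))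
     ltac:(exists (mkposreal _ Hdpos); intros y Hy; exact Hy)).
  destruct Hc as [d Hd].
  assert (Hnear : forall u, in01 u -> Rabs (u - t) < d -> a < h_s u < b).
  { intros u Hu Hut. specialize (Hd u Hut Hu). simpl in Hd.
    assert (Rmin (h_s t - a) (b - h_s t) <= h_s t - a) by apply Rmin_l.
    assert (Rmin (h_s t - a) (b - h_s t) <= b - h_s t) by apply Rmin_r.
    apply Rabs_def2 in Hd. lra. }
  clear Hd Hcont.
  set (x := INR s).
  assert (Hx3 : 3 <= x) by (unfold x; replace 3 with (INR 3) by (simpl; ring); apply le_INR; lia).
  assert (HN : exists N, (1 <= N)%nat /\ / x ^ N < d).
  { destruct (archimed (/ d)) as [Hu _].
    assert (Hd0 : 0 < d) by apply cond_pos.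
    assert (0 < / d) by (apply Rinv_0_lt_compat; auto).
    assert (Hz : (0 <= up (/ d))%Z) by (apply le_IZR; lra).
    exists (S (Z.to_nat (up (/ d)))). split. lia.
    assert (H1 := pow_gt_n x (Z.to_nat (up (/d))) ltac:(lra)).
    rewrite INR_toZ in H1 by auto.
    assert (1 <= x ^ Z.to_nat (up (/ d))) by (apply pow_R1_Rle; lra).
    simpl. 
    assert (/ d < x * x ^ Z.to_nat (up (/ d))) by nra.
    assert (Hq : / (x * x ^ Z.to_nat (up (/ d))) < / / d) by (apply Rinv_lt_contravar; [apply Rmult_lt_0_compat; nra | lra]). rewrite Rinv_inv in Hq. exact Hq. }
  destruct HN as [N [HN1 HNd]].
  set (F := fun k => (up (x ^ k * t) - 1)%Z).
  assert (HF : forall k, IZR (F k) <= x ^ k * t < IZR (F k) + 1) by (intros; apply floor_spec).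
  assert (HF0 : F 0%nat = 0%Z).
  { specialize (HF 0%nat). simpl in HF. assert (-1 < F 0%nat < 1)%Z by (split; apply lt_IZR; simpl; lra). lia. }
  assert (Hxz : x = IZR (Z.of_nat s)) by apply INR_IZR_INZ.
  assert (Hdig : forall n, (0 <= F (S n) - Z.of_nat s * F n <= Z.of_nat s - 1)%Z).
  { intros n. assert (A := HF n). assert (B := HF (S n)). simpl in B.
    assert (x * IZR (F n) < IZR (F (S n)) + 1) by nra.
    assert (IZR (F (S n)) < x * IZR (F n) + x) by nra.
    rewrite Hxz, <- mult_IZR in *.
    assert (Z.of_nat s * F n < F (S n) + 1)%Z by (apply lt_IZR; rewrite plus_IZR; simpl; lra).
    assert (F (S n) < Z.of_nat s * F n + Z.of_nat s)%Z by (apply lt_IZR; rewrite plus_IZR; lra).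
    lia. }
  set (al := fun n => Z.to_nat (F (S n) - Z.of_nat s * F n)).
  assert (Hal : forall n, (al n < s)%nat) by (intros n; unfold al; specialize (Hdig n); lia).
  assert (HalR : forall n, INR (al n) = IZR (F (S n)) - x * IZR (F n)).
  { intros n. unfold al. rewrite INR_toZ by (apply Hdig). rewrite minus_IZR, mult_IZR, <- Hxz. auto. }
  assert (Hx0 : x <> 0) by lra.
  assert (Htel : forall M, psum (fun n => INR (al n) / x ^ S n) M = IZR (F M) / x ^ M).
  { induction M. simpl. rewrite HF0. simpl. field.
    change (psum (fun n => INR (al n) / x ^ S n) M + INR (al M) / x ^ S M = IZR (F (S M)) / x ^ S M).
    rewrite IHM, HalR. simpl. field. split; auto. apply pow_nonzero; auto. }
  set (g := fun (c n : nat) => if Nat.ltb n N then al n else if Nat.eqb n N then 1%nat else c).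
  assert (Hg : forall c, (c <= 2)%nat -> forall n, (g c n < s)%nat).
  { intros c Hc n. unfold g. destruct (Nat.ltb n N). auto. destruct (Nat.eqb n N); lia. }
  assert (HgT : forall c n, (S N <= n)%nat -> g c n = c).
  { intros c n Hn. unfold g. destruct (Nat.ltb_spec n N). lia. destruct (Nat.eqb_spec n N). lia. auto. }
  assert (HgN : forall c, g c N = 1%nat).
  { intros c. unfold g. rewrite Nat.ltb_irrefl, Nat.eqb_refl. auto. }
  assert (HgL : forall c n, (n < N)%nat -> g c n = al n).
  { intros c n Hn. unfold g. destruct (Nat.ltb_spec n N). auto. lia. }
  set (X := x ^ N).
  assert (HX : 0 < X) by (apply pow_lt; lra).
  set (w := / (x * X)).
  assert (Hw : 0 < w) by (apply Rinv_0_lt_compat; nra).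
  set (P := IZR (F N) / X).
  assert (HV : forall c, sadic s (g c) = P + w + INR c / (x - 1) * w).
  { intros c. unfold sadic. fold x.
    rewrite (is_series_unique _ _ (tail_series x ltac:(lra) c (S N) (g c) (HgT c))).
    change (psum (fun n => INR (g c n) / x ^ S n) N + INR (g c N) / x ^ S N +
      INR c / ((x - 1) * x ^ S N) = P + w + INR c / (x - 1) * w).
    rewrite (psum_ext _ (fun n => INR (al n) / x ^ S n)).
    2:{ intros k Hk. rewrite HgL; auto. }
    rewrite Htel, HgN. unfold P, w, X. simpl. field. repeat split; try lra. apply pow_nonzero; auto. }
  assert (HPt : P <= t < P + x * w).
  { assert (E1 : P = IZR (F N) * / X) by reflexivity.
    assert (E2 : x * w = / X) by (unfold w; field; split; lra).
    rewrite E2, E1. specialize (HF N). fold X in HF.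
    assert (X * / X = 1) by (field; lra). assert (0 < / X) by (apply Rinv_0_lt_compat; lra). destruct HF as [HF1 HF2].
    split. assert (0 <= (X * t - IZR (F N)) * / X) by (apply Rmult_le_pos; lra). nra. assert (0 < (IZR (F N) + 1 - X * t) * / X) by (apply Rmult_lt_0_compat; lra). nra. }
  assert (HFN : (0 <= F N)%Z).
  { specialize (HF N). assert (0 <= x ^ N * t) by (fold X; nra).
    assert (-1 < F N)%Z by (apply lt_IZR; lra). lia. }
  assert (HFN2 : IZR (F N) + 1 <= X).
  { specialize (HF N). fold X in HF.
    assert (EX : X = IZR (Z.of_nat s ^ Z.of_nat N)) by (unfold X; rewrite Hxz, pow_IZR; auto).
    rewrite EX in HF |- *.
    assert (F N < Z.of_nat s ^ Z.of_nat N)%Z by (apply lt_IZR; nra).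
    rewrite <- plus_IZR. apply IZR_le. lia. }
  assert (HxwX : x * w * X = 1) by (unfold w; field; split; lra).
  assert (HP0 : 0 <= P) by (unfold P; apply Rdiv_le_0_compat; auto; apply IZR_le; auto).
  assert (HP1 : P + x * w <= 1).
  { assert (P * X = IZR (F N)) by (unfold P; field; lra). nra. }
  assert (HV01 : forall c, (c <= 2)%nat -> in01 (sadic s (g c)) /\ Rabs (sadic s (g c) - t) < d).
  { intros c Hc. rewrite HV. set (q := INR c / (x - 1)).
    assert (Hq : q * (x - 1) = INR c) by (unfold q; field; lra).
    assert (Hc2 : INR c <= 2) by (replace 2 with (INR 2) by (simpl; ring); apply le_INR; auto).
    assert (0 <= INR c) by apply pos_INR.
    assert (0 <= q <= 1) by (split; nra).
    assert (Hxw : x * w < d) by (replace (x * w) with (/ X) by (unfold w; field; split; lra); exact HNd).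
    split. unfold in01. split; nra.
    apply Rabs_def1; nra. }
  set (B := fun c n => beta A1 (g c) n).
  assert (HBc : forall c n, (n <= N)%nat -> B c n = B 0%nat n).
  { intros c n Hn. unfold B. apply beta_ext. intros k Hk.
    destruct (Nat.eq_dec k N). subst. rewrite !HgN; auto. rewrite !HgL by lia. auto. }
  assert (HW : forall c, binval (beta A1 (g c)) =
     psum (fun n => INR (B 0%nat n) / 2 ^ S n) (S N) + INR (B c (S N)) / ((2 - 1) * 2 ^ S N)).
  { intros c. unfold binval.
    rewrite (is_series_unique _ _ (tail_series 2 ltac:(lra) (B c (S N)) (S N) (beta A1 (g c))
         (fun n Hn => beta_const A1 (g c) (S N) c (HgT c) n Hn))).
    f_equal. apply psum_ext. intros k Hk. fold (B c k). rewrite HBc by lia. auto. }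
  assert (HBS : forall c, B c (S N) = if Nat.eqb c 1 then B 0%nat N else (1 - B 0%nat N)%nat).
  { intros c. unfold B at 1. simpl. rewrite HgN, (HgT c (S N)) by lia. fold (B c N). rewrite HBc by lia.
    destruct (Nat.eqb c 1); auto. }
  assert (HW01 : forall c, in01 (binval (beta A1 (g c)))).
  { intros c. rewrite HW.
    assert (Hbb : (B c (S N) <= 1)%nat) by apply beta_le1.
    assert (Hb' : INR (B c (S N)) <= 1) by (replace 1 with (INR 1) by (simpl; ring); apply le_INR; auto).
    assert (0 <= INR (B c (S N))) by apply pos_INR.
    assert (H0 : 0 <= psum (fun n => INR (B 0%nat n) / 2 ^ S n) (S N)).
    { apply psum_ge0. intros. apply Rdiv_le_0_compat. apply pos_INR. apply pow_lt; lra. }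
    assert (H1 : psum (fun n => INR (B 0%nat n) / 2 ^ S n) (S N) <= psum (fun n => 1 / 2 ^ S n) (S N)).
    { apply psum_le. intros k _. unfold Rdiv. apply Rmult_le_compat_r.
      left; apply Rinv_0_lt_compat, pow_lt; lra.
      replace 1 with (INR 1) by (simpl; ring); apply le_INR; apply beta_le1. }
    rewrite psum_geom2 in H1.
    assert (0 < 2 ^ S N) by (apply pow_lt; lra).
    replace (INR (B c (S N)) / ((2 - 1) * 2 ^ S N)) with (INR (B c (S N)) * / 2 ^ S N) by (field; lra).
    replace (1 / 2 ^ S N) with (/ 2 ^ S N) in H1 by (field; lra).
    assert (0 < / 2 ^ S N) by (apply Rinv_0_lt_compat; lra).
    unfold in01; split; nra. }
  assert (HW02 : binval (beta A1 (g 0%nat)) = binval (beta A1 (g 2%nat))).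
  { rewrite !HW, !HBS. auto. }
  assert (HW1 : binval (beta A1 (g 1%nat)) <> binval (beta A1 (g 0%nat))).
  { rewrite !HW, !HBS. simpl Nat.eqb. cbv iota.
    assert (0 < 2 ^ S N) by (apply pow_lt; lra).
    assert (Hbb : (B 0%nat N <= 1)%nat) by apply beta_le1.
    destruct (B 0%nat N) as [|[|]]; [| |lia]; simpl; intro E.
    all: assert (1 / ((2 - 1) * (2 * 2 ^ N)) > 0) by (apply Rdiv_lt_0_compat; [lra| apply Rmult_lt_0_compat; [lra| apply Rmult_lt_0_compat; [lra| apply pow_lt; lra]]]).
    all: unfold Rdiv in *; rewrite Rmult_0_l in E; lra. }
  assert (Hf2 : f (h_s (sadic s (g 1%nat))) <> f (h_s (sadic s (g 0%nat)))).
  { rewrite !Hf by (apply Hg; lia). intro E.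
    destruct (Rtotal_order (binval (beta A1 (g 1%nat))) (binval (beta A1 (g 0%nat)))) as [L|[L|L]]; [|tauto|];
    destruct H2m as [Hi|Hi]; first [specialize (Hi _ _ (HW01 _) (HW01 _) L)]; lra. }
  assert (Hf02 : f (h_s (sadic s (g 0%nat))) = f (h_s (sadic s (g 2%nat)))).
  { rewrite !Hf by (apply Hg; lia). rewrite HW02. auto. }
  assert (HV0 := HV01 0%nat ltac:(lia)). assert (HV1 := HV01 1%nat ltac:(lia)). assert (HV2 := HV01 2%nat ltac:(lia)).
  assert (Hab0 := Hnear _ (proj1 HV0) (proj2 HV0)).
  assert (Hab1 := Hnear _ (proj1 HV1) (proj2 HV1)).
  assert (Hab2 := Hnear _ (proj1 HV2) (proj2 HV2)).
  assert (L01 : sadic s (g 0%nat) < sadic s (g 1%nat)).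
  { rewrite !HV. simpl INR. assert (0 < 1 / (x - 1) * w) by (apply Rmult_lt_0_compat; auto; apply Rdiv_lt_0_compat; lra).
    replace (0 / (x - 1) * w) with 0 by (field; lra). lra. }
  assert (L12 : sadic s (g 1%nat) < sadic s (g 2%nat)).
  { rewrite !HV. simpl INR. assert (0 < 1 / (x - 1) * w) by (apply Rmult_lt_0_compat; auto; apply Rdiv_lt_0_compat; lra).
    replace ((1 + 1) / (x - 1) * w) with (1 / (x - 1) * w + 1 / (x - 1) * w) by (field; lra). lra. }
  set (X0 := h_s (sadic s (g 0%nat))) in *.
  set (X1 := h_s (sadic s (g 1%nat))) in *.
  set (X2 := h_s (sadic s (g 2%nat))) in *.
  destruct Hsm as [Hi|Hi].
  - assert (X0 < X1) by (apply Hi; tauto). assert (X1 < X2) by (apply Hi; tauto).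
    destruct Hmono as [Hm|Hm].
    + assert (f X0 <= f X1) by (apply Hm; lra). assert (f X1 <= f X2) by (apply Hm; lra). lra.
    + assert (f X1 <= f X0) by (apply Hm; lra). assert (f X2 <= f X1) by (apply Hm; lra). lra.
  - assert (X1 < X0) by (apply Hi; tauto). assert (X2 < X1) by (apply Hi; tauto).
    destruct Hmono as [Hm|Hm].
    + assert (f X1 <= f X0) by (apply Hm; lra). assert (f X2 <= f X1) by (apply Hm; lra). lra.
    + assert (f X0 <= f X1) by (apply Hm; lra). assert (f X1 <= f X2) by (apply Hm; lra). lra.
Qed.
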